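(* Let $(A;R)\in\mathcal C$ and let $X,Y$ be closed sets of $PG(A;R)$. Then $d(X\cup Y)=d(X)+d(Y)-d(X\cap Y)$ if and only if $X\cup Y\le A$ and $R|(X\cup Y)=(R|X)\cup(R|Y)$.
   Context: A set system is a pair $(A;R)$ where $R$ is a set of finite non-empty subsets of $A$; for $X\subseteq A$, $R[X]=\{r\in R:r\subseteq X\}$ and $\delta(X)=|X|-|R[X]|$; also $R|X=R[X]$. $\mathcal C$ is the class of finite set systems with $\delta(X)\ge0$ for all $X\subseteq A$. $X\le A$ means $\delta(X)\le\delta(X')$ for all $X\subseteq X'\subseteq A$. $d(X)=\min\{\delta(Y):X\subseteq Y\subseteq A\}$, $\mathrm{cl}(X)=\{y:d(X\cup\{y\})=d(X)\}$, and $PG(A;R)$ is the matroid $(A,\mathrm{cl})$; closed sets are $F$ with $\mathrm{cl}(F)=F$. *)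

(* Defs.v *)
From mathcomp Require Import all_boot all_order all_algebra.
Set Implicit Arguments. Unset Strict Implicit. Unset Printing Implicit Defensive.
Import Order.TTheory GRing.Theory Num.Theory.
Local Open Scope ring_scope.

Definition set_system (A : finType) (R : {set {set A}}) : Prop :=
  forall r, r \in R -> r != set0.

Definition restr (A : finType) (R : {set {set A}}) (X : {set A}) : {set {set A}} :=
  [set r in R | r \subset X].

Definition delta (A : finType) (R : {set {set A}}) (X : {set A}) : int :=
  (#|X|%:Z - #|restr R X|%:Z).

Definition in_C (A : finType) (R : {set {set A}}) : Prop :=
  set_system R /\ forall X : {set A}, 0 <= delta R X.

(* X <= A  (X is self-sufficient) *)
Definition ss (A : finType) (R : {set {set A}}) (X : {set A}) : Prop :=
  forall X' : {set A}, X \subset X' -> delta R X <= delta R X'.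

(* d(X) = min { delta(Y) : X ⊆ Y ⊆ A }  (the range is non-empty: Y = A) *)
Definition dd (A : finType) (R : {set {set A}}) (X : {set A}) : int :=
  \big[Num.min/delta R setT]_(Y : {set A} | X \subset Y) delta R Y.

Definition pg_cl (A : finType) (R : {set {set A}}) (X : {set A}) : {set A} :=
  [set y | dd R (y |: X) == dd R X].

Definition pg_closed (A : finType) (R : {set {set A}}) (F : {set A}) : Prop :=
  pg_cl R F = F.

(* Main.v *)
Require Import Defs.
From mathcomp Require Import all_boot all_order all_algebra.
From mathcomp Require Import zify.
Import Order.TTheory GRing.Theory Num.Theory.
Local Open Scope ring_scope.

Section H.
Variables (A : finType) (R : {set {set A}}).

Lemma dd_le (X Y : {set A}) : X \subset Y -> dd R X <= delta R Y.
Proof. by move=> h; rewrite /dd (bigD1 Y) //= ge_min lexx. Qed.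

Lemma dd_ex (X : {set A}) : exists Y : {set A}, X \subset Y /\ dd R X = delta R Y.
Proof.
rewrite /dd; apply: (big_ind (fun v => exists Y : {set A}, X \subset Y /\ v = delta R Y)).
- by exists setT; rewrite subsetT.
- move=> x y [Y1 [h1 ->]] [Y2 [h2 ->]].
  by case: (leP (delta R Y1) (delta R Y2)) => _; [exists Y1|exists Y2].
- by move=> Y h; exists Y.
Qed.

Lemma dd_mono (X X' : {set A}) : X \subset X' -> dd R X <= dd R X'.
Proof.
move=> h; have [Z [hZ ->]] := dd_ex X'; apply: dd_le; exact: subset_trans hZ.
Qed.

Lemma closed_dd (X : {set A}) : pg_closed R X -> dd R X = delta R X /\ ss R X.
Proof.
move=> hc; have [Z [hZ eZ]] := dd_ex X.
have ZX : Z \subset X.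
  apply/subsetP => y yZ; rewrite -hc /pg_cl inE; apply/eqP/le_anti.
  rewrite (@dd_mono X (y |: X) (subsetUr [set y] X)) andbT eZ; apply: dd_le.
  by rewrite subUset sub1set yZ hZ.
have eXZ : X = Z by apply/eqP; rewrite eqEsubset hZ ZX.
subst Z; split=> // X' h; rewrite -eZ; exact: dd_le.
Qed.

Lemma ss_dd (X : {set A}) : ss R X -> dd R X = delta R X.
Proof.
move=> h; have [Z [hZ eZ]] := dd_ex X; apply: le_anti.
by rewrite dd_le // eZ h.
Qed.

Lemma restrI (X Y : {set A}) : restr R (X :&: Y) = restr R X :&: restr R Y.
Proof. by apply/setP => r; rewrite !inE subsetI; case: (r \in R). Qed.

Lemma restrU_sub (X Y : {set A}) : restr R X :|: restr R Y \subset restr R (X :|: Y).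
Proof.
apply/subsetP => r; rewrite !inE; case/orP => /andP[-> h] /=.
  exact: subset_trans h (subsetUl _ _).
exact: subset_trans h (subsetUr _ _).
Qed.

Lemma delta_sub (X Y : {set A}) : delta R (X :|: Y) + delta R (X :&: Y) =
  delta R X + delta R Y - (#|restr R (X :|: Y)|%:Z - #|restr R X :|: restr R Y|%:Z).
Proof.
rewrite /delta restrI; have h1 := cardsUI X Y.
have h2 := cardsUI (restr R X) (restr R Y). lia.
Qed.

Lemma ss_meet (X Y : {set A}) : ss R X -> ss R Y -> ss R (X :&: Y).
Proof.
move=> hX hY Z hZ.
have sub (U V : {set A}) : delta R (U :&: V) <= delta R U + delta R V - delta R (U :|: V).
  have := delta_sub U V; have := subset_leq_card (restrU_sub U V). lia.
have e1 : (Z :&: X) :&: Y = X :&: Y.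
  apply/setP => a; have := subsetP hZ a; rewrite !inE.
  by case: (a \in X); case: (a \in Y); case: (a \in Z) => //= ->.
have a1 := sub Z X; have a2 := sub (Z :&: X) Y; rewrite e1 in a2.
have b1 := hX (Z :|: X) (subsetUr _ _).
have b2 := hY ((Z :&: X) :|: Y) (subsetUr _ _).
lia.
Qed.

End H.

Theorem lemma6p2 (A : finType) (R : {set {set A}}) (X Y : {set A}) :
  in_C R -> pg_closed R X -> pg_closed R Y ->
  (dd R (X :|: Y) = dd R X + dd R Y - dd R (X :&: Y) <->
   ss R (X :|: Y) /\ restr R (X :|: Y) = restr R X :|: restr R Y).
Proof.
move=> _ hX hY.
have [eX sX] := @closed_dd A R _ hX; have [eY sY] := @closed_dd A R _ hY.
have eI := @ss_dd A R _ (@ss_meet A R _ _ sX sY).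
rewrite eX eY eI.
have ds := @delta_sub A R X Y.
have cs := subset_leq_card (@restrU_sub A R X Y).
have dle := @dd_le A R _ _ (subxx (X :|: Y)).
split.
- move=> e.
  have e1 : dd R (X :|: Y) = delta R (X :|: Y) by lia.
  have e2 : #|restr R (X :|: Y)| = #|restr R X :|: restr R Y|%N by lia.
  split.
    by move=> Z hZ; rewrite -e1; exact: (@dd_le A R _ _ hZ).
  by apply/eqP; rewrite eq_sym eqEcard (@restrU_sub A R) e2 leqnn.
- move=> [hs hr]; rewrite (@ss_dd A R _ hs); move: ds; rewrite hr; lia.
Qed.
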